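(* Let $n'$ be a positive even integer and $q\ge 4$ be even. There exists an ordering of all words of $\mathbb{Z}_q^{n'}$ in which consecutive words have Hamming distance $1$, beginning with $(0,0,\ldots,0)$ and ending with $(1,1,\ldots,1)$.
   Context: The Hamming distance between two words is the number of coordinates in which they differ. *)

(* Defs.v *)
From mathcomp Require Import all_boot.
Set Implicit Arguments. Unset Strict Implicit. Unset Printing Implicit Defensive.

Definition word (q n : nat) := (n.-tuple 'I_q)%type.

Definition hamming (q n : nat) (u v : word q n) : nat :=
  #|[pred i : 'I_n | tnth u i != tnth v i]|.

Definition gray_path (q n : nat) (w0 : word q n) (t : seq (word q n)) : Prop :=
  [/\ uniq (w0 :: t),
      (forall w : word q n, w \in w0 :: t),
      path (fun u v => hamming u v == 1) w0 t,
      (forall i, val (tnth w0 i) = 0)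
    & (forall i, val (tnth (last w0 t) i) = 1)].

(* Main.v *)
Require Import Defs.
From mathcomp Require Import all_boot.

Definition tc (q n : nat) (a : 'I_q) (x : word q n) : word q n.+1 :=
  [tuple of a :: x].
Definition nconst (q n : nat) (c : 'I_q) : word q n := [tuple of nseq n c].
Definition hrel (q n : nat) := fun u v : word q n => hamming u v == 1.

Arguments tc {q n}.
Arguments nconst {q} n.
Arguments hrel {q n}.
Definition HP (q n : nat) (c d : 'I_q) (w0 : word q n) (t : seq (word q n)) :=
  [/\ uniq (w0 :: t), (forall w, w \in w0 :: t), path (@hrel q n) w0 t,
      w0 = nconst n c & last w0 t = nconst n d].

Arguments HP {q n}.

Lemma hamming_cons (q n : nat) (a b : 'I_q) (x y : word q n) :
  hamming (tc a x) (tc b y) = (a != b) + hamming x y.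
Proof.
rewrite /hamming -!sum1_card big_mkcond big_ord_recl /=.
rewrite !inE /tc !tnth0 [in RHS]big_mkcond /=.
case: (a != b); congr (_ + _).
all: apply: eq_big => // i _; rewrite !inE /=.
all: by rewrite (tnthS a x i) (tnthS b y i).
Qed.

Lemma hamming_refl (q n : nat) (x : word q n) : hamming x x = 0.
Proof. rewrite /hamming; apply: eq_card0 => i; rewrite !inE /=; by case: eqP. Qed.

Lemma tc_inj (q n : nat) (a : 'I_q) : injective (@tc q n a).
Proof. by move=> x y /(congr1 val) [] /val_inj. Qed.

Lemma mem_tc (q n : nat) (a b : 'I_q) (y : word q n) s :
  (tc b y \in map (@tc q n a) s) = (b == a) && (y \in s).
Proof.
case: eqP => [->|ne]; first by rewrite (mem_map (@tc_inj q n _)).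
apply/mapP => -[x _ /(congr1 val)] /= [E _]; exact: ne.
Qed.

Lemma thead_tc (q n : nat) (b : 'I_q) (y : word q n) : thead (tc b y) = b.
Proof. by rewrite /tc theadE. Qed.

Lemma layers (q n : nat)
  (IH : forall c d : 'I_q, c != d -> exists w0 t, @HP q n c d w0 t) :
  forall (ls : seq 'I_q) (a s : 'I_q) (ss : seq 'I_q),
  uniq (a :: ls) -> size ss = size (a :: ls) -> path (fun u v => u != v) s ss ->
  exists (w0 : word q n.+1) t,
    [/\ uniq (w0 :: t), (forall w, (w \in w0 :: t) = (thead w \in a :: ls)),
        path (@hrel q n.+1) w0 t, w0 = tc a (nconst n s)
      & last w0 t = tc (last a ls) (nconst n (last s ss))].
Proof.
elim=> [|b ls IHl] a s [|e ss] //=.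
  case: ss => // _ _ /andP[Hse _].
  have [p0 [pt [U M P W L]]] := IH _ _ Hse.
  exists (tc a p0), (map (@tc q n a) pt); split.
  - change (uniq (map (@tc q n a) (p0 :: pt))); by rewrite map_inj_uniq //; apply: tc_inj.
  - by move=> w; case/tupleP: w => b y; rewrite -map_cons mem_tc M inE andbT thead_tc.
  - rewrite path_map; apply: sub_path P => x y.
    by rewrite /= /hrel hamming_cons eqxx.
  - by rewrite W.
  - by rewrite last_map L.
move=> /andP[Ha Hu] [Hsz] /andP[Hse Hp].
have [p0 [pt [U M P W L]]] := IH _ _ Hse.
have [r0 [rt [RU RM RP RW RL]]] := IHl b e ss Hu Hsz Hp.
exists (tc a p0), (map (@tc q n a) pt ++ r0 :: rt); split.
- change (uniq (map (@tc q n a) (p0 :: pt) ++ r0 :: rt)); rewrite cat_uniq map_inj_uniq; last exact: tc_inj.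
  rewrite U RU andbT andTb; apply/hasPn => w Hw; move: Hw; case/tupleP: w => b' y Hw.
  rewrite mem_tc negb_and; apply/orP; left.
  rewrite RM thead_tc in Hw; apply/eqP => E; rewrite E in Hw.
  by move: Ha; rewrite Hw.
- case/tupleP => b' y; change [tuple of b' :: y] with (tc b' y).
  by rewrite -cat_cons -map_cons mem_cat mem_tc M RM !inE thead_tc andbT.
- rewrite (cat_path (@hrel q n.+1) (tc a p0) (map (@tc q n a) pt)) path_map /= RP andbT; apply/andP; split.
    by apply: sub_path P => x y; rewrite /= /hrel hamming_cons eqxx.
  rewrite last_map L RW /hrel hamming_cons hamming_refl addn0.
  by move: Ha; rewrite inE negb_or => /andP[-> _].
- by rewrite W.
- by rewrite last_cat /= RL.
Qed.

Fixpoint altseq (T : Type) (c x : T) (k : nat) : seq T :=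
  if k is k'.+1 then x :: @altseq T x c k' else [::].

Arguments altseq {T}.

Lemma size_alt (T : Type) (k : nat) (c x : T) : size (altseq c x k) = k.
Proof. by elim: k c x => //= k IH c x; rewrite IH. Qed.

Lemma alt_path (T : eqType) (k : nat) (c x : T) :
  c != x -> path (fun u v => u != v) c (altseq c x k).
Proof. by elim: k c x => //= k IH c x cx; rewrite cx IH // eq_sym. Qed.

Lemma alt_last (T : eqType) (k : nat) (c x : T) :
  last c (altseq c x k) \in [:: c; x].
Proof.
elim: k c x => [|k IH] c x /=; first by rewrite inE eqxx.
by have := IH x c; rewrite !inE; case/orP => ->; rewrite ?orbT.
Qed.

Lemma gmain (q n : nat) : 3 <= q ->
  forall c d : 'I_q, c != d -> exists w0 t, @HP q n c d w0 t.
Proof.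
move=> Hq; elim: n => [|n IH] c d cd.
  exists [tuple], [::]; split => //.
  - by move=> w; rewrite inE (tuple0 w) eqxx.
  - by rewrite (tuple0 (nconst 0 c)).
  - by rewrite (tuple0 (nconst 0 d)).
have [x Hx] : exists x : 'I_q, (x != c) && (x != d).
  have : ~~ ([set: 'I_q] \subset [set c; d]).
    apply/negP => /subset_leq_card; rewrite cardsT card_ord cards2 cd /= => H.
    by have := leq_trans Hq H.
  by case/subsetPn => y _; rewrite !inE negb_or => H; exists y.
move: Hx => /andP[xc xd].
set mid := [seq y <- enum 'I_q | (y != c) && (y != d)].
set ss := rcons (altseq c x (size mid).+1) d.
have Hu : uniq (c :: rcons mid d).
  rewrite /= rcons_uniq mem_rcons inE negb_or cd /= !mem_filter !eqxx.
  by rewrite /= andbF /= filter_uniq // enum_uniq.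
have Hsz : size ss = size (c :: rcons mid d).
  by rewrite /ss size_rcons size_alt /= size_rcons.
have Hp : path (fun u v => u != v) c ss.
  rewrite /ss rcons_path alt_path 1?eq_sym //=.
  by have := alt_last _ (size mid) x c; rewrite !inE => /orP[]/eqP ->; rewrite eq_sym.
have [w0 [t [U M P W L]]] := @layers q n IH _ _ _ _ Hu Hsz Hp.
exists w0, t; split => //.
- move=> w; rewrite M !inE mem_rcons inE mem_filter mem_enum andbT.
  by case: (thead w == c); case: (thead w == d).
- by rewrite W; apply: val_inj.
- by rewrite L /ss !last_rcons; apply: val_inj.
Qed.

Theorem lemma5 (n q : nat) :
  0 < n -> ~~ odd n -> 4 <= q -> ~~ odd q ->
  exists (w0 : word q n) (t : seq (word q n)), gray_path w0 t.
Proof.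
move=> _ _ Hq _.
have q0 : 0 < q by apply: leq_trans Hq.
have q1 : 1 < q by apply: leq_trans Hq.
pose c : 'I_q := Ordinal q0.
pose d : 'I_q := Ordinal q1.
have [w0 [t [U M P W L]]] := @gmain q n (ltnW Hq) c d isT.
exists w0, t; split => // i.
- by rewrite W tnth_nseq.
- by rewrite L tnth_nseq.
Qed.
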